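(* Let $X$ be a subshift and $n\ge2$. If $a_1\dots a_n$ is a significant block of $X$, then $a_1\dots a_{n-1}$ is also a significant block of $X$.
   Context: Let $\mathcal A$ be a finite alphabet and $\sigma$ the shift, $(\sigma x)_i=x_{i+1}$. For a one-sided subshift $X^+\subseteq\mathcal A^{\mathbb N}$ (nonempty, closed, $\sigma$-invariant), the natural extension is $\tilde X=\{x\in\mathcal A^{\mathbb Z}: x_px_{p+1}\dots\in X^+\ \forall p\in\mathbb Z\}$; for a two-sided subshift $X$, $X^+$ is the set of right rays of its points and $\tilde X=X$. For a block $a_{-n}\dots a_0$ occurring in $\tilde X$, $\mathrm{fol}(a_{-n}\dots a_0)=\{b_0b_1\dots\in X^+:\exists b\in\tilde X,\ b_{-n}\dots b_0=a_{-n}\dots a_0\}$. A block $a_{-n}\dots a_0$ occurring in $\tilde X$ with $n\ge1$ is a significant block of $X$ if $\mathrm{fol}(a_{-n}\dots a_0)\subsetneq\mathrm{fol}(a_{-n+1}\dots a_0)$; single symbols occurring in $\tilde X$ are also counted as significant. *)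

(* Defs.v *)
From Stdlib Require Import ZArith.
From mathcomp Require Import all_boot.
Set Implicit Arguments. Unset Strict Implicit. Unset Printing Implicit Defensive.

Section Shifts.
Variable A : finType.

Definition oseq := nat -> A.
Definition tseq := Z -> A.

(* closedness in the product topology, written out combinatorially *)
Definition oclosed (X : oseq -> Prop) : Prop :=
  forall y : oseq,
    (forall k : nat, exists z, X z /\ forall i : nat, (i < k)%N -> z i = y i) -> X y.

Definition tclosed (X : tseq -> Prop) : Prop :=
  forall x : tseq,
    (forall k : nat, exists z, X z /\
       forall i : Z, (- Z.of_nat k <= i <= Z.of_nat k)%Z -> z i = x i) -> X x.

Definition one_sided_subshift (Xp : oseq -> Prop) : Prop :=
  (exists y, Xp y) /\ oclosed Xp /\
  (forall y, Xp y -> Xp (fun k => y k.+1)).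

Definition two_sided_subshift (X : tseq -> Prop) : Prop :=
  (exists x, X x) /\ tclosed X /\
  (forall x, X x -> X (fun i => x (i + 1)%Z)) /\
  (forall x, X x -> X (fun i => x (i - 1)%Z)).

Definition nat_ext (Xp : oseq -> Prop) : tseq -> Prop :=
  fun x => forall p : Z, Xp (fun k => x (p + Z.of_nat k)%Z).

Definition rays (X : tseq -> Prop) : oseq -> Prop :=
  fun y => exists x, X x /\ forall k : nat, x (Z.of_nat k) = y k.

Definition occurs (Xt : tseq -> Prop) (w : seq A) : Prop :=
  exists x p, Xt x /\ forall i : nat, (i < size w)%N -> x (p + Z.of_nat i)%Z = nth (x 0%Z) w i.

(* fol(w), with w = a_{-n} ... a_0 placed so that its last letter sits at 0 *)
Definition fol (Xp : oseq -> Prop) (Xt : tseq -> Prop) (w : seq A) : oseq -> Prop :=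
  fun y => Xp y /\ exists b : tseq, Xt b /\
    (forall i : nat, (i < size w)%N ->
       b (Z.of_nat i - Z.of_nat (size w).-1)%Z = nth (b 0%Z) w i) /\
    (forall k : nat, b (Z.of_nat k) = y k).

Definition strict_subset (P Q : oseq -> Prop) : Prop :=
  (forall y, P y -> Q y) /\ exists y, Q y /\ ~ P y.

Definition significant (Xp : oseq -> Prop) (Xt : tseq -> Prop) (w : seq A) : Prop :=
  occurs Xt w /\
  (size w = 1 \/ ((2 <= size w)%N /\ strict_subset (fol Xp Xt w) (fol Xp Xt (behead w)))).

End Shifts.

(* Main.v *)
Require Import Defs.
From Stdlib Require Import ZArith Lia FunctionalExtensionality.
From mathcomp Require Import all_boot zify.

Section Gen.
Variable A : finType.
Variables (Xp : oseq A -> Prop) (Xt : tseq A -> Prop).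
Hypothesis Hup : forall x, Xt x -> Xt (fun i => x (i + 1)%Z).
Hypothesis Hdn : forall x, Xt x -> Xt (fun i => x (i - 1)%Z).
Hypothesis Hray : forall x, Xt x -> Xp (fun k => x (Z.of_nat k)).

Lemma fol_sub (u : seq A) y : (2 <= size u)%N -> fol Xp Xt u y -> fol Xp Xt (behead u) y.
Proof.
case: u => [|a u] //= Hs [Hy [b [Hb [Hw Hr]]]].
split=> //; exists b; split=> //; split=> // i Hi.
transitivity (nth (b 0%Z) (a::u) i.+1) => //; rewrite -(Hw i.+1 Hi).
f_equal; change (size (a::u)).-1 with (size u); rewrite Nat2Z.inj_succ.
move: Hs; case: (size u) => [|m] // _; rewrite Nat2Z.inj_succ /=; lia.
Qed.

Lemma key (w : seq A) y : (3 <= size w)%N ->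
  fol Xp Xt (behead w) y -> ~ fol Xp Xt w y ->
  exists y', fol Xp Xt (behead (take (size w).-1 w)) y' /\
             ~ fol Xp Xt (take (size w).-1 w) y'.
Proof.
move=> H3 [Hy [b [Hb [Hw Hr]]]] Hn.
rewrite size_behead in Hw.
have Hsz : size (take (size w).-1 w) = (size w).-1 by rewrite size_takel // leq_pred.
have [m Em] : exists m, size w = m.+3 by exists (size w - 3); lia.
rewrite Em in Hw Hsz *.
exists (fun k : nat => b (Z.of_nat k - 1)%Z); split.
  split; first by have := Hray _ (Hdn _ Hb).
  exists (fun i => b (i - 1)%Z); split; first exact: Hdn _ Hb.
  split=> // i; rewrite size_behead Hsz /= => Hi.
  rewrite nth_behead nth_take; last by lia.
  have Hi' : (i < m.+3.-1)%N by lia.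
  have := Hw i Hi'; rewrite nth_behead (set_nth_default (b (0-1)%Z) (b 0%Z)); last by rewrite Em.
  move=> <-; f_equal; lia.
move=> [_ [c [Hc [Hcw Hcr]]]]; apply: Hn; split=> //.
exists (fun i => c (i + 1)%Z); split; first exact: Hup _ Hc.
split; last first.
  move=> k; rewrite -Hr; have -> : (Z.of_nat k + 1 = Z.of_nat k.+1)%Z by lia.
  by rewrite Hcr; f_equal; lia.
rewrite Hsz in Hcw; rewrite Em => i Hi.
case: (ltnP i m.+2) => Hi2.
  have := Hcw i Hi2.
  rewrite nth_take // (set_nth_default (c 0%Z) (c (0+1)%Z)) ?Em //.
  move=> <-; f_equal; lia.
have Hie : i = m.+2 by lia.
subst i.
have := Hw m.+1 (ltnSn _).
rewrite nth_behead (set_nth_default (c (0+1)%Z) (b 0%Z)) ?Em // => <-.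
have -> : (Z.of_nat m.+2 - Z.of_nat m.+2 + 1 = Z.of_nat 1)%Z by lia.
rewrite Hcr; f_equal; lia.
Qed.

Lemma gen (w : seq A) : (2 <= size w)%N -> significant Xp Xt w ->
  significant Xp Xt (take (size w).-1 w).
Proof.
move=> H2 [[x [p [Hx Hxw]]] Hs].
split.
  exists x, p; split=> // i Hi.
  rewrite size_takel ?leq_pred // in Hi.
  have Hi' : (i < size w)%N by lia.
  by rewrite nth_take ?Hxw.
case: Hs => [E|[_ [Hsub [y [Hy Hny]]]]]; first by rewrite E in H2.
case: (ltnP (size w) 3) => H3.
  left; rewrite size_takel ?leq_pred //.
  by move: H2 H3; case: (size w) => [|[|[|k]]].
right; split.
  by rewrite size_takel ?leq_pred //; move: H3; case: (size w) => [|[|[|k]]].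
split.
  by move=> z; apply: fol_sub; rewrite size_takel ?leq_pred //;
     move: H3; case: (size w) => [|[|[|k]]].
have [y' [H1 H2']] := key w y H3 Hy Hny.
by exists y'.
Qed.
End Gen.

Theorem lemma3p9 (A : finType) :
  (forall (Xp : oseq A -> Prop) (w : seq A),
     one_sided_subshift Xp -> (2 <= size w)%N ->
     significant Xp (nat_ext Xp) w ->
     significant Xp (nat_ext Xp) (take (size w).-1 w)) /\
  (forall (X : tseq A -> Prop) (w : seq A),
     two_sided_subshift X -> (2 <= size w)%N ->
     significant (rays X) X w ->
     significant (rays X) X (take (size w).-1 w)).
Proof.
split.
  move=> Xp w _; apply: gen.
  - move=> x Hx p.
    have -> : (fun k : nat => x (p + Z.of_nat k + 1)%Z) = (fun k => x ((p + 1) + Z.of_nat k)%Z).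
      by apply: functional_extensionality => k; f_equal; lia.
    exact: Hx.
  - move=> x Hx p.
    have -> : (fun k : nat => x (p + Z.of_nat k - 1)%Z) = (fun k => x ((p - 1) + Z.of_nat k)%Z).
      by apply: functional_extensionality => k; f_equal; lia.
    exact: Hx.
  - by move=> x Hx; exact: (Hx 0%Z).
move=> X w [_ [_ [Hu Hd]]]; apply: gen => //.
by move=> x Hx; exists x.
Qed.
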